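(* Let $\bar j\in\{1,\dots,\bar d\}$ and $z\in\mathbb R^{\bar d}$ with $\mathrm{supp}(z)\subset\{1,\dots,\bar j-1\}$. Then: (1) if $\bar j=1$, then $\mathrm{supp}(z)=\emptyset$, $z=0$, and $\mathrm{supp}(\nabla f_i(z))\subset\{1\}$ for every $i\in[1,m]$; (2) if $\bar j$ is even, then $\mathrm{supp}(\nabla f_i(z))\subset\{1,\dots,\bar j\}$ for $i\in[1,\frac m3]$ and $\mathrm{supp}(\nabla f_i(z))\subset\{1,\dots,\bar j-1\}$ for $i\in[\frac m3+1,m]$; (3) if $\bar j$ is odd and $\bar j\ne1$, then $\mathrm{supp}(\nabla f_i(z))\subset\{1,\dots,\bar j-1\}$ for $i\in[1,\frac{2m}3]$ and $\mathrm{supp}(\nabla f_i(z))\subset\{1,\dots,\bar j\}$ for $i\in[\frac{2m}3+1,m]$.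
   Context: $\mathrm{supp}(z)=\{j:[z]_j\ne0\}$, $[z]_j$ the $j$-th coordinate. Fix $\epsilon\in(0,1)$, $L_f>0$, integers $m_1\ge2$, $m_2\ge1$ with $m_1m_2$ even, $m=3m_1m_2$, an odd integer $\bar d\ge5$. $\Psi(u)=0$ ($u\le0$), $1-e^{-u^2}$ ($u>0$); $\Phi(v)=4\arctan v+2\pi$. For $z\in\mathbb R^{\bar d}$: $\varphi(z,1)=-\Psi(1)\Phi([z]_1)$, $\varphi(z,j)=\Psi(-[z]_{j-1})\Phi(-[z]_j)-\Psi([z]_{j-1})\Phi([z]_j)$ ($2\le j\le\bar d$); $h_i(z)=\varphi(z,1)+3\sum_{j=1}^{\lfloor\bar d/2\rfloor}\varphi(z,2j)$ for $1\le i\le m/3$, $h_i(z)=\varphi(z,1)$ for $m/3+1\le i\le 2m/3$, $h_i(z)=\varphi(z,1)+3\sum_{j=1}^{\lfloor\bar d/2\rfloor}\varphi(z,2j+1)$ for $2m/3+1\le i\le m$. $f_i(z)=\frac{300\pi\epsilon^2}{mL_f}h_i(\frac{\sqrt mL_fz}{150\pi\epsilon})$. *)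

(* Defs.v *)
From Stdlib Require Import Reals Lra Lia Arith.
From Coquelicot Require Import Coquelicot.
Open Scope R_scope.

(* Vectors z in R^dbar are represented as z : nat -> R, coordinate [z]_k = z k
   for 1 <= k <= dbar (coordinates outside 1..dbar are never used). *)

Definition Psi (u : R) : R := if Rle_dec u 0 then 0 else 1 - exp (- (u ^ 2)).
Definition Phi (v : R) : R := 4 * atan v + 2 * PI.

Definition varphi (z : nat -> R) (j : nat) : R :=
  match j with
  | 1%nat => - Psi 1 * Phi (z 1%nat)
  | _ => Psi (- z (j - 1)%nat) * Phi (- z j) - Psi (z (j - 1)%nat) * Phi (z j)
  end.

Fixpoint sum1 (n : nat) (g : nat -> R) : R :=
  match n with
  | O => 0
  | S k => sum1 k g + g (S k)
  end.

Definition hfun (dbar m i : nat) (z : nat -> R) : R :=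
  if Nat.leb i (m / 3) then
    varphi z 1 + 3 * sum1 (Nat.div2 dbar) (fun j => varphi z (2 * j))
  else if Nat.leb i (2 * m / 3) then varphi z 1
  else varphi z 1 + 3 * sum1 (Nat.div2 dbar) (fun j => varphi z (2 * j + 1)).

Definition ffun (dbar m : nat) (eps Lf : R) (i : nat) (z : nat -> R) : R :=
  300 * PI * eps ^ 2 / (INR m * Lf) *
  hfun dbar m i (fun k => sqrt (INR m) * Lf * z k / (150 * PI * eps)).

Definition shift (z : nat -> R) (j : nat) (t : R) : nat -> R :=
  fun k => if Nat.eqb k j then z k + t else z k.

(* supp(grad F(z)) subset S, for F : R^dbar -> R:
   all partial derivatives of F at z exist, and [grad F(z)]_j = 0 for j in 1..dbar, j not in S *)
Definition grad_supp_sub (dbar : nat) (F : (nat -> R) -> R) (z : nat -> R)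
  (S : nat -> Prop) : Prop :=
  (forall j, (1 <= j <= dbar)%nat -> ex_derive (fun t => F (shift z j t)) 0) /\
  (forall j, (1 <= j <= dbar)%nat -> ~ S j -> is_derive (fun t => F (shift z j t)) 0 0).

(* Main.v *)
Require Import Defs.
From Stdlib Require Import Reals Arith Lra Lia.
From Coquelicot Require Import Coquelicot.
Open Scope R_scope.
From Stdlib Require Import Arith.

Lemma dconst (a x : R) : is_derive (fun _ => a) x 0.
Proof. auto_derive; auto. Qed.
Lemma dconst_ex (a x : R) : ex_derive (fun _ => a) x.
Proof. exists 0; apply dconst. Qed.

Lemma Psi_0 : Psi 0 = 0.
Proof. unfold Psi; destruct Rle_dec; lra. Qed.

Lemma Psi_bound u : Rabs (Psi u) <= u ^ 2.
Proof.
  unfold Psi; destruct Rle_dec.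
  - rewrite Rabs_R0; nra.
  - pose proof (exp_ineq1_le (- (u^2))).
    assert (exp (- (u^2)) <= 1).
    { rewrite <- exp_0. apply exp_le_3 || (destruct (Req_dec (u^2) 0); [rewrite H0; rewrite Ropp_0; lra| left; apply exp_increasing; nra]). }
    rewrite Rabs_right; lra.
Qed.

Lemma Psi_d0 : is_derive Psi 0 0.
Proof.
  apply is_derive_Reals. intros e He. exists (mkposreal e He). intros h Hh Hhe.
  simpl in Hhe. rewrite Rplus_0_l, Psi_0, Rminus_0_r, Rminus_0_r.
  pose proof (Psi_bound h).
  unfold Rdiv. rewrite Rabs_mult, Rabs_inv.
  apply Rle_lt_trans with (Rabs h).
  2: exact Hhe.
  assert (0 < Rabs h) by (apply Rabs_pos_lt; auto).
  apply (Rmult_le_reg_r (Rabs h)); auto.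
  rewrite Rmult_assoc, Rinv_l by lra. rewrite Rmult_1_r.
  replace (Rabs h * Rabs h) with (h^2). exact H.
  rewrite <- Rabs_mult. rewrite Rabs_right; [ring| nra].
Qed.

Lemma Psi_ex x : ex_derive Psi x.
Proof.
  destruct (Rtotal_order x 0) as [Hx|[Hx|Hx]].
  - exists 0. apply is_derive_ext_loc with (fun _ => 0).
    + exists (mkposreal (-x) ltac:(lra)). intros y Hy.
      assert (Rabs (y - x) < - x) by apply Hy.
      apply Rabs_def2 in H. unfold Psi; destruct Rle_dec; lra.
    + apply dconst.
  - subst; exists 0; apply Psi_d0.
  - eexists. apply is_derive_ext_loc with (fun t => 1 - exp (- (t^2))).
    + exists (mkposreal x Hx). intros y Hy.
      assert (Rabs (y - x) < x) by apply Hy.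
      apply Rabs_def2 in H. unfold Psi; destruct Rle_dec; lra.
    + auto_derive; auto.
Qed.

Lemma Phi_ex x : ex_derive Phi x.
Proof. unfold Phi. auto_derive. auto. Qed.

Lemma prod_ex (a b : R -> R) : ex_derive a 0 -> ex_derive b 0 ->
  ex_derive (fun t => Psi (a t) * Phi (b t)) 0.
Proof.
  intros Ha Hb. apply (ex_derive_mult (fun t => Psi (a t)) (fun t => Phi (b t))).
  - apply ex_derive_comp; auto. apply Psi_ex.
  - apply ex_derive_comp; auto. apply Phi_ex.
Qed.

Lemma prod_0 (a b : R -> R) da db : is_derive a 0 da -> is_derive b 0 db ->
  (a 0 = 0 \/ (da = 0 /\ db = 0)) ->
  is_derive (fun t => Psi (a t) * Phi (b t)) 0 0.
Proof.
  intros Ha Hb H.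
  destruct (Psi_ex (a 0)) as [dP HP]. destruct (Phi_ex (b 0)) as [dF HF].
  pose proof (is_derive_comp _ _ _ _ _ HP Ha) as H1.
  pose proof (is_derive_comp _ _ _ _ _ HF Hb) as H2.
  pose proof (is_derive_mult _ _ _ _ _ H1 H2 ltac:(intros; apply Rmult_comm)) as H3.
  simpl in H3. unfold scal, mult, plus in H3; simpl in H3.
  replace 0 with (mult (mult da dP) (Phi (b 0)) + mult (Psi (a 0)) (mult db dF)) at 2.
  exact H3.
  unfold mult; simpl.
  destruct H as [H|[E1 E2]].
  - rewrite H in *. pose proof (is_derive_unique _ _ _ HP). pose proof (is_derive_unique _ _ _ Psi_d0).
    rewrite H4 in H0. subst dP. rewrite Psi_0. ring.
  - subst. ring.
Qed.

Lemma form_ex (a b : R -> R) : ex_derive a 0 -> ex_derive b 0 ->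
  ex_derive (fun t => Psi (- a t) * Phi (- b t) - Psi (a t) * Phi (b t)) 0.
Proof.
  intros Ha Hb.
  apply (ex_derive_minus (fun t => Psi (- a t) * Phi (- b t)) (fun t => Psi (a t) * Phi (b t))).
  - apply (prod_ex (fun t => - a t) (fun t => - b t)).
    + apply (ex_derive_opp a); auto.
    + apply (ex_derive_opp b); auto.
  - apply prod_ex; auto.
Qed.

Lemma form_0 (a b : R -> R) (da db : R) : is_derive a 0 da -> is_derive b 0 db ->
  (a 0 = 0 \/ (da = 0 /\ db = 0)) ->
  is_derive (fun t => Psi (- a t) * Phi (- b t) - Psi (a t) * Phi (b t)) 0 0.
Proof.
  intros Ha Hb H.
  replace 0 with (0 - 0) at 2 by ring.
  apply (is_derive_minus (fun t => Psi (- a t) * Phi (- b t)) (fun t => Psi (a t) * Phi (b t))).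
  - apply (prod_0 (fun t => - a t) (fun t => - b t) (- da) (- db)).
    + apply (is_derive_opp a); auto.
    + apply (is_derive_opp b); auto.
    + destruct H as [H|[H1 H2]]; [left; cbv beta; rewrite H; apply Ropp_0 | right; rewrite H1, H2; split; apply Ropp_0].
  - apply (prod_0 a b da db); auto.
Qed.

Lemma varphi_ne1 (W : nat -> R) k : k <> 1%nat ->
  varphi W k = Psi (- W (k-1)%nat) * Phi (- W k) - Psi (W (k-1)%nat) * Phi (W k).
Proof. intros; destruct k as [|[|k]]; [reflexivity|lia|reflexivity]. Qed.

Lemma varphi_1 (W : nat -> R) : varphi W 1 = - Psi 1 * Phi (W 1%nat).
Proof. reflexivity. Qed.

Section V.
Variables (s c : R) (z : nat -> R) (j : nat).
Hypothesis hc : c <> 0.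

Lemma coord_d n : is_derive (fun t => s * shift z j t n / c) 0 (if Nat.eqb n j then s / c else 0).
Proof.
  unfold shift. destruct (Nat.eqb n j).
  - auto_derive; auto. field; auto.
  - apply dconst.
Qed.

Lemma coord_ex n : ex_derive (fun t => s * shift z j t n / c) 0.
Proof. eexists; apply coord_d. Qed.

Lemma term_ex k : ex_derive (fun t => varphi (fun n => s * shift z j t n / c) k) 0.
Proof.
  destruct (Nat.eq_dec k 1) as [->|Hk].
  - apply ex_derive_ext with (fun t => - Psi 1 * Phi (s * shift z j t 1%nat / c)).
    { intros t; symmetry; apply varphi_1. }
    apply (ex_derive_scal (fun t => Phi (s * shift z j t 1%nat / c))).
    apply (ex_derive_comp Phi (fun t => s * shift z j t 1%nat / c)). apply Phi_ex. apply coord_ex.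
  - eapply ex_derive_ext. { intros t. symmetry. apply varphi_ne1. exact Hk. }
    apply (form_ex (fun t => s * shift z j t (k-1)%nat / c) (fun t => s * shift z j t k / c));
    apply coord_ex.
Qed.

Lemma term1_0 : j <> 1%nat -> is_derive (fun t => varphi (fun n => s * shift z j t n / c) 1) 0 0.
Proof.
  intros Hj.
  apply is_derive_ext with (fun t => Phi (s * z 1%nat / c) * (- Psi 1)).
  { intros t. rewrite varphi_1. unfold shift. destruct (Nat.eqb_spec 1 j); [lia|apply Rmult_comm]. }
  apply dconst.
Qed.

Lemma termk_0 k : (2 <= k)%nat -> (z (k-1)%nat = 0 \/ (k <> j /\ (k-1)%nat <> j)) ->
  is_derive (fun t => varphi (fun n => s * shift z j t n / c) k) 0 0.
Proof.
  intros Hk H.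
  eapply is_derive_ext. { intros t. symmetry. apply varphi_ne1. lia. }
  apply (form_0 (fun t => s * shift z j t (k-1)%nat / c) (fun t => s * shift z j t k / c) _ _ (coord_d _) (coord_d _)).
  destruct H as [H|[H1 H2]].
  - left. unfold shift. destruct (Nat.eqb _ _); rewrite H; field; auto.
  - right. apply Nat.eqb_neq in H1. apply Nat.eqb_neq in H2. rewrite H1, H2. split; reflexivity.
Qed.
End V.

Lemma sum1_ex n (g : nat -> R -> R) : (forall k, ex_derive (g k) 0) ->
  ex_derive (fun t => sum1 n (fun k => g k t)) 0.
Proof.
  intros H; induction n; simpl.
  - apply dconst_ex.
  - apply (ex_derive_plus (fun t => sum1 n (fun k => g k t)) (g (S n))); auto.
Qed.

Lemma sum1_0 n (g : nat -> R -> R) : (forall k, (1 <= k <= n)%nat -> is_derive (g k) 0 0) ->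
  is_derive (fun t => sum1 n (fun k => g k t)) 0 0.
Proof.
  intros H; induction n; simpl.
  - apply dconst.
  - replace 0 with (0 + 0) at 2 by ring.
    apply (is_derive_plus (fun t => sum1 n (fun k => g k t)) (g (S n))).
    + apply IHn; intros; apply H; lia.
    + apply H; lia.
Qed.

Lemma combo_0 (C : R) (f : R -> R) (g : nat -> R -> R) N : is_derive f 0 0 ->
  (forall k, (1 <= k <= N)%nat -> is_derive (g k) 0 0) ->
  is_derive (fun t => C * (f t + 3 * sum1 N (fun k => g k t))) 0 0.
Proof.
  intros Hf Hg. replace 0 with (C * (0 + 3 * 0)) at 2 by ring.
  apply (is_derive_scal (fun t => f t + 3 * sum1 N (fun k => g k t))).
  apply (is_derive_plus f (fun t => 3 * sum1 N (fun k => g k t))); auto.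
  apply (is_derive_scal (fun t => sum1 N (fun k => g k t))).
  apply sum1_0; auto.
Qed.

Lemma combo_ex (C : R) (f : R -> R) (g : nat -> R -> R) N : ex_derive f 0 ->
  (forall k, ex_derive (g k) 0) ->
  ex_derive (fun t => C * (f t + 3 * sum1 N (fun k => g k t))) 0.
Proof.
  intros Hf Hg.
  apply (ex_derive_scal (fun t => f t + 3 * sum1 N (fun k => g k t))).
  apply (ex_derive_plus f (fun t => 3 * sum1 N (fun k => g k t))); auto.
  apply (ex_derive_scal (fun t => sum1 N (fun k => g k t))).
  apply sum1_ex; auto.
Qed.

Lemma combo1_0 (C : R) (f : R -> R) : is_derive f 0 0 -> is_derive (fun t => C * f t) 0 0.
Proof. intros Hf. replace 0 with (C * 0) at 2 by ring. apply (is_derive_scal f); auto. Qed.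

Lemma combo1_ex (C : R) (f : R -> R) : ex_derive f 0 -> ex_derive (fun t => C * f t) 0.
Proof. intros Hf. apply (ex_derive_scal f); auto. Qed.

Lemma key (dbar m : nat) (eps Lf : R) (i : nat) (z : nat -> R) (S : nat -> Prop) :
  150 * PI * eps <> 0 ->
  (forall j, (1 <= j <= dbar)%nat -> ~ S j -> j <> 1%nat /\
     ((i <= m / 3)%nat -> forall jj, (1 <= jj <= Nat.div2 dbar)%nat ->
        z (2 * jj - 1)%nat = 0 \/ ((2 * jj)%nat <> j /\ (2 * jj - 1)%nat <> j)) /\
     ((2 * m / 3 < i)%nat -> forall jj, (1 <= jj <= Nat.div2 dbar)%nat ->
        z (2 * jj + 1 - 1)%nat = 0 \/ ((2 * jj + 1)%nat <> j /\ (2 * jj + 1 - 1)%nat <> j))) ->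
  grad_supp_sub dbar (ffun dbar m eps Lf i) z S.
Proof.
  intros hc H. split.
  - intros j _. unfold ffun, hfun.
    destruct (Nat.leb i (m / 3)); [|destruct (Nat.leb i (2 * m / 3))].
    + apply (combo_ex _ (fun t => varphi (fun n => sqrt (INR m) * Lf * shift z j t n / (150 * PI * eps)) 1)
        (fun k t => varphi (fun n => sqrt (INR m) * Lf * shift z j t n / (150 * PI * eps)) (2 * k))).
      apply term_ex; auto. intros; apply term_ex; auto.
    + apply (combo1_ex _ (fun t => varphi (fun n => sqrt (INR m) * Lf * shift z j t n / (150 * PI * eps)) 1)).
      apply term_ex; auto.
    + apply (combo_ex _ (fun t => varphi (fun n => sqrt (INR m) * Lf * shift z j t n / (150 * PI * eps)) 1)
        (fun k t => varphi (fun n => sqrt (INR m) * Lf * shift z j t n / (150 * PI * eps)) (2 * k + 1))).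
      apply term_ex; auto. intros; apply term_ex; auto.
  - intros j Hj HS. destruct (H j Hj HS) as [H1 [H2 H3]]. unfold ffun, hfun.
    destruct (Nat.leb i (m / 3)) eqn:E1; [|destruct (Nat.leb i (2 * m / 3)) eqn:E2].
    + apply Nat.leb_le in E1.
      apply (combo_0 _ (fun t => varphi (fun n => sqrt (INR m) * Lf * shift z j t n / (150 * PI * eps)) 1)
        (fun k t => varphi (fun n => sqrt (INR m) * Lf * shift z j t n / (150 * PI * eps)) (2 * k))).
      apply term1_0; auto. intros k Hk; apply termk_0; auto. lia.
    + apply (combo1_0 _ (fun t => varphi (fun n => sqrt (INR m) * Lf * shift z j t n / (150 * PI * eps)) 1)).
      apply term1_0; auto.
    + apply Nat.leb_gt in E2.
      apply (combo_0 _ (fun t => varphi (fun n => sqrt (INR m) * Lf * shift z j t n / (150 * PI * eps)) 1)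
        (fun k t => varphi (fun n => sqrt (INR m) * Lf * shift z j t n / (150 * PI * eps)) (2 * k + 1))).
      apply term1_0; auto. intros k Hk; apply termk_0; auto. lia.
Qed.

Theorem lemma7 (eps Lf : R) (m1 m2 dbar : nat)
  (heps : 0 < eps < 1) (hLf : 0 < Lf)
  (hm1 : (2 <= m1)%nat) (hm2 : (1 <= m2)%nat) (hm : Nat.Even (m1 * m2))
  (hd : (5 <= dbar)%nat) (hdodd : Nat.Odd dbar)
  (jbar : nat) (hj : (1 <= jbar <= dbar)%nat) (z : nat -> R)
  (hz : forall k, (1 <= k <= dbar)%nat -> z k <> 0 -> (1 <= k <= jbar - 1)%nat) :
  let m := (3 * m1 * m2)%nat in
  (jbar = 1%nat ->
     (forall k, (1 <= k <= dbar)%nat -> ~ (z k <> 0)) /\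
     (forall k, (1 <= k <= dbar)%nat -> z k = 0) /\
     (forall i, (1 <= i <= m)%nat ->
        grad_supp_sub dbar (ffun dbar m eps Lf i) z (fun k => k = 1%nat))) /\
  (Nat.Even jbar ->
     (forall i, (1 <= i <= m / 3)%nat ->
        grad_supp_sub dbar (ffun dbar m eps Lf i) z (fun k => (1 <= k <= jbar)%nat)) /\
     (forall i, (m / 3 + 1 <= i <= m)%nat ->
        grad_supp_sub dbar (ffun dbar m eps Lf i) z (fun k => (1 <= k <= jbar - 1)%nat))) /\
  (Nat.Odd jbar -> jbar <> 1%nat ->
     (forall i, (1 <= i <= 2 * m / 3)%nat ->
        grad_supp_sub dbar (ffun dbar m eps Lf i) z (fun k => (1 <= k <= jbar - 1)%nat)) /\
     (forall i, (2 * m / 3 + 1 <= i <= m)%nat ->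
        grad_supp_sub dbar (ffun dbar m eps Lf i) z (fun k => (1 <= k <= jbar)%nat))).
Proof.
  intros m.
  assert (zero : forall n, (1 <= n <= dbar)%nat -> (jbar <= n)%nat -> z n = 0).
  { intros n Hn Hjn. destruct (Req_dec (z n) 0) as [E|E]; auto.
    apply hz in E; auto. lia. }
  assert (hc : 150 * PI * eps <> 0).
  { assert (0 < 150 * PI * eps). { apply Rmult_lt_0_compat; [pose proof PI_RGT_0; lra | lra]. } lra. }
  pose proof (Nat.Odd_double dbar hdodd) as Hdb. unfold Nat.double in Hdb.
  set (N := Nat.div2 dbar) in *.
  assert (G : forall j k, (2 <= k <= dbar)%nat -> (((k = j) \/ (k - 1 = j))%nat -> (jbar <= k - 1)%nat) ->
     z (k - 1)%nat = 0 \/ (k <> j /\ (k - 1)%nat <> j)).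
  { intros j k Hk Hkj.
    destruct (Nat.eq_dec k j); [left; apply zero; lia|].
    destruct (Nat.eq_dec (k - 1) j); [left; apply zero; lia|].
    right; auto. }
  split; [|split].
  - intros ->. split; [|split].
    + intros k Hk E. apply hz in E; auto; lia.
    + intros k Hk. apply zero; lia.
    + intros i Hi. apply key; auto. intros j Hj HS. split; [exact HS|split].
      * intros _ jj Hjj. apply G; lia.
      * intros _ jj Hjj. apply G; lia.
  - intros [p Hp]. split.
    + intros i Hi. apply key; auto. intros j Hj HS. split; [lia|split].
      * intros _ jj Hjj. apply G; lia.
      * intros _ jj Hjj. apply G; lia.
    + intros i Hi. apply key; auto. intros j Hj HS. split; [lia|split].
      * intros Hi2. exfalso. lia.
      * intros _ jj Hjj. apply G; lia.
  - intros [p Hp] Hj1. split.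
    + intros i Hi. apply key; auto. intros j Hj HS. split; [lia|split].
      * intros _ jj Hjj. apply G; lia.
      * intros Hi2. exfalso. lia.
    + intros i Hi. apply key; auto. intros j Hj HS. split; [lia|split].
      * intros _ jj Hjj. apply G; lia.
      * intros _ jj Hjj. apply G; lia.
Qed.
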